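(* Given a set of $n_0$ points in $\mathbb{R}^1$, one can maintain a unimax coloring of the current point set with respect to intervals under deletions, using $\lceil\log n_0\rceil$ colors and at the cost of one recoloring per deletion.
   Context: A coloring of a finite point set $P\subset\mathbb{R}$ by integers is unimax with respect to intervals if for every interval $I$ containing at least one point of $P$, the maximum color among the points of $P\cap I$ is attained by exactly one point. A recoloring is a change of color of one remaining point. *)

(* Defs.v *)
From HB Require Import structures.
From mathcomp Require Import all_boot all_order all_algebra.
From mathcomp Require Import finmap.
From mathcomp Require Import reals.
Set Implicit Arguments. Unset Strict Implicit. Unset Printing Implicit Defensive.
Import Order.TTheory GRing.Theory Num.Theory.
Local Open Scope fset_scope.

(* A coloring is any map R -> nat; only its values on the current point set
   matter.  Colors are natural numbers (a palette of integers). *)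

Definition unimax (R : realType) (S : {fset R}) (c : R -> nat) : Prop :=
  forall I : interval R, (exists2 x, x \in S & x \in I) ->
    exists x, [/\ x \in S, x \in I &
      forall y, y \in S -> y \in I -> y != x -> (c y < c x)%N].

Definition in_palette (R : realType) (k : nat) (S : {fset R}) (c : R -> nat) :=
  forall x, x \in S -> (1 <= c x <= k)%N.

Definition nrecolor (R : realType) (S : {fset R}) (c c' : R -> nat) : nat :=
  count (fun x => c x != c' x) S.

(* [maintainable k S c]: the current state (S, c) is a unimax coloring with
   palette {1..k}, and for every possible deletion of a point p of S one can
   respond with a coloring c' of S \ {p} differing from c on at most one
   remaining point, from which the same holds again (an online strategy against
   an arbitrary adaptive sequence of deletions). *)
Inductive maintainable (R : realType) (k : nat) : {fset R} -> (R -> nat) -> Prop :=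
| Maintain (S : {fset R}) (c : R -> nat) :
    unimax S c -> in_palette k S c ->
    (forall p, p \in S -> exists c' : R -> nat,
        (nrecolor (S `\ p) c c' <= 1)%N /\ maintainable k (S `\ p) c') ->
    maintainable k S c.

(* Main.v *)
Require Import Defs.
From HB Require Import structures.
From mathcomp Require Import all_boot all_order all_algebra.
From mathcomp Require Import finmap.
From mathcomp Require Import reals.
From mathcomp Require Import zify.
Local Open Scope fset_scope.

Section Helpers.
Import Order.TTheory GRing.Theory Num.Theory.
Local Open Scope ring_scope.
Variable R : realType.

Definition pairP (S : {fset R}) (c : R -> nat) :=
  forall x y, x \in S -> y \in S -> x < y -> c x = c y ->
    exists z, [/\ z \in S, x < z, z < y & (c x < c z)%N].

Lemma seq_max (s : seq R) (c : R -> nat) : s != [::] ->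
  exists2 x, x \in s & forall y, y \in s -> (c y <= c x)%N.
Proof.
elim: s => [//|a s IH] _.
case: (eqVneq s [::]) => [->|sn].
  by exists a; rewrite ?inE // => y; rewrite inE => /eqP ->.
have [x xs xm] := IH sn.
case: (leqP (c a) (c x)) => h.
  exists x; first by rewrite inE xs orbT.
  by move=> y; rewrite inE => /orP[/eqP ->|/xm].
exists a; first by rewrite inE eqxx.
move=> y; rewrite inE => /orP[/eqP ->//|/xm h2]; exact: leq_trans h2 (ltnW h).
Qed.

Lemma seq_maxR (s : seq R) : s != [::] ->
  exists2 x, x \in s & forall y, y \in s -> y <= x.
Proof.
elim: s => [//|a s IH] _.
case: (eqVneq s [::]) => [->|sn].
  by exists a; rewrite ?inE // => y; rewrite inE => /eqP ->.
have [x xs xm] := IH sn.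
case: (leP a x) => h.
  exists x; first by rewrite inE xs orbT.
  by move=> y; rewrite inE => /orP[/eqP ->|/xm].
exists a; first by rewrite inE eqxx.
move=> y; rewrite inE => /orP[/eqP ->//|/xm h2].
exact: (le_trans h2 (ltW h)).
Qed.

Lemma itv_convex (I : interval R) x y z : x \in I -> y \in I ->
  x <= z -> z <= y -> z \in I.
Proof.
case: I => bl br; rewrite !itv_boundlr => /andP[xl _] /andP[_ yr] xz zy.
apply/andP; split.
  by apply: le_trans xl _; rewrite bnd_simp.
by apply: le_trans yr; rewrite bnd_simp.
Qed.

Lemma pair_unimax S c : pairP S c -> unimax S c.
Proof.
move=> H I [x0 x0S x0I].
set s := [seq y <- (S : seq R) | y \in I].
have x0s : x0 \in s by rewrite mem_filter x0I x0S.
have sn : s != [::] by apply/eqP => E; rewrite E in x0s.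
have [m ms mmax] := @seq_max s c sn.
move: (ms); rewrite mem_filter => /andP[mI mS].
exists m; split => // y yS yI ynm.
rewrite ltnNge; apply/negP => le.
have eq : c y = c m by apply/eqP; rewrite eqn_leq le mmax // mem_filter yI yS.
case: (ltgtP y m) => [ylt|mlt|yeq]; last by rewrite yeq eqxx in ynm.
- have [z [zS yz zm cz]] := H y m yS mS ylt eq.
  have zI : z \in I := @itv_convex I y m z yI mI (ltW yz) (ltW zm).
  have := mmax z; rewrite mem_filter zI zS => /(_ isT); by rewrite -eq leqNgt cz.
- have [z [zS yz zm cz]] := H m y mS yS mlt (esym eq).
  have zI : z \in I := @itv_convex I m y z mI yI (ltW yz) (ltW zm).
  have := mmax z; rewrite mem_filter zI zS => /(_ isT); by rewrite leqNgt cz.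
Qed.

Lemma unimax_pair S c : unimax S c -> pairP S c.
Proof.
move=> U x y xS yS xy cxy.
have xI : x \in `[x, y] by rewrite in_itv /= lexx (ltW xy).
have yI : y \in `[x, y] by rewrite in_itv /= lexx (ltW xy).
have [w [wS wI wmax]] := U `[x, y] (ex_intro2 _ _ x xS xI).
case: (eqVneq w x) => [wx|wx].
  by subst w; have := wmax y yS yI (negbT (gt_eqF xy)); rewrite cxy ltnn.
case: (eqVneq w y) => [wy|wy].
  by subst w; have := wmax x xS xI (negbT (lt_eqF xy)); rewrite cxy ltnn.
exists w; move: wI; rewrite in_itv /= => /andP[xw wy']; split => //.
- by rewrite lt_neqAle eq_sym wx xw.
- by rewrite lt_neqAle wy wy'.
- by have := wmax x xS xI; rewrite eq_sym wx; apply.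
Qed.

Lemma delete_step k S c p : pairP S c -> in_palette k S c -> p \in S ->
  exists c' : R -> nat, [/\ (nrecolor (S `\ p) c c' <= 1)%N,
    pairP (S `\ p) c' & in_palette k (S `\ p) c'].
Proof.
move=> H Pc pS.
set s := [seq y <- (S : seq R) | y < p].
case: (eqVneq s [::]) => [s0|sn].
  exists c; split.
  - rewrite /nrecolor (eq_count (a2 := pred0)) ?count_pred0 // => x.
    by rewrite /= eqxx.
  - move=> x y; rewrite !in_fsetD1 => /andP[xp xS] /andP[yp yS] xy cxy.
    have [z [zS xz zy cz]] := H x y xS yS xy cxy.
    exists z; split => //; rewrite in_fsetD1 zS andbT.
    apply/eqP => zp; subst z.
    have : x \in s by rewrite mem_filter xz xS.
    by rewrite s0.
  - by move=> x; rewrite in_fsetD1 => /andP[_ /Pc].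
have [q qs qmax] := @seq_maxR s sn.
move: qs; rewrite mem_filter => /andP[qp qS].
have qmax' : forall y, y \in S -> y < p -> y <= q.
  by move=> y yS yp; apply: qmax; rewrite mem_filter yp yS.
set M := maxn (c q) (c p).
exists (fun x => if x == q then M else c x); split.
- rewrite /nrecolor.
  apply: (leq_trans (sub_count (a2 := pred1 q) _ _)).
    by move=> x /=; case: (eqVneq x q) => // _; move/eqP.
  by rewrite count_uniq_mem ?fset_uniq // leq_b1.
- have qnp : q != p by rewrite lt_eqF.
  move=> x y; rewrite !in_fsetD1 => /andP[xp xS] /andP[yp yS] xy.
  case: (eqVneq x q) => [xq|xnq]; case: (eqVneq y q) => [yq|ynq].
  + by subst; rewrite ltxx in xy.
  + subst x => cy; simpl in cy.
    case: (leqP (c p) (c q)) => hpq.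
    * have cM : M = c q by apply/maxn_idPl.
      have [z [zS qz zy cz]] := H q y qS yS xy (etrans (esym cM) cy).
      have znq : z != q by rewrite gt_eqF.
      have znp : z != p by apply/eqP => zp; subst z; rewrite ltnNge hpq in cz.
      exists z; split => //; first by rewrite in_fsetD1 znp zS.
      by rewrite ?eqxx (negPf znq) cM.
    * have cM : M = c p by apply/maxn_idPr/ltnW.
      have py : p < y.
        case: (ltgtP p y) => // [yp'|pey]; last by rewrite pey eqxx in yp.
        by have := qmax' y yS yp'; rewrite leNgt xy.
      have [z [zS pz zy cz]] := H p y pS yS py (etrans (esym cM) cy).
      have znq : z != q by rewrite gt_eqF // (lt_trans qp pz).
      have znp : z != p by rewrite gt_eqF.
      exists z; split => //; [by rewrite in_fsetD1 znp zS | exact: lt_trans qp pz |].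
      by rewrite (negPf znq) cM.
  + subst y => cx; rewrite ?eqxx ?(negPf xnq) in cx.
    case: (leqP (c p) (c q)) => hpq.
    * have cM : M = c q by apply/maxn_idPl.
      have [z [zS xz zq cz]] := H x q xS qS xy (etrans cx cM).
      have znq : z != q by rewrite lt_eqF.
      have znp : z != p by rewrite lt_eqF // (lt_trans zq qp).
      exists z; split => //; first by rewrite in_fsetD1 znp zS.
      by rewrite ?(negPf xnq) (negPf znq).
    * have cM : M = c p by apply/maxn_idPr/ltnW.
      have [z [zS xz zp cz]] := H x p xS pS (lt_trans xy qp) (etrans cx cM).
      have znq : z != q.
        by apply/eqP => zq; subst z; move: cz; rewrite cx cM ltnNge (ltnW hpq).
      have znp : z != p by rewrite lt_eqF.
      exists z; split => //; [by rewrite in_fsetD1 znp zS | by rewrite lt_neqAle znq qmax' | by rewrite (negPf znq)].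
  + rewrite ?(negPf xnq) ?(negPf ynq) => cxy.
    have [z [zS xz zy cz]] := H x y xS yS xy cxy.
    case: (eqVneq z p) => [zp|znp].
      subst z.
      have xq : x < q.
        by rewrite lt_neqAle xnq qmax'.
      exists q; split => //; first by rewrite in_fsetD1 qnp qS.
        exact: lt_trans qp zy.
      rewrite ?(negPf xnq) eqxx.
      exact: leq_trans cz (leq_maxr _ _).
    exists z; split => //; first by rewrite in_fsetD1 znp zS.
    case: eqP => [zq|_] //; subst z.
    exact: leq_trans cz (leq_maxl _ _).
- move=> x; rewrite in_fsetD1 => /andP[_ xS].
  case: eqP => [_|_]; last exact: Pc.
  have /andP[a1 a2] := Pc q qS; have /andP[b1 b2] := Pc p pS.
  by rewrite (leq_trans a1 (leq_maxl _ _)) geq_max a2 b2.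
Qed.

Lemma maint_all k n S c : (#|` S| <= n)%N -> pairP S c -> in_palette k S c ->
  maintainable k S c.
Proof.
elim: n S c => [|n IH] S c hS H Pc; constructor => //.
- exact: pair_unimax.
- by move=> p pS; move: hS; rewrite (cardfsD1 p) pS.
- exact: pair_unimax.
- move=> p pS; have [c' [h1 h2 h3]] := @delete_step k S c p H Pc pS.
  exists c'; split => //; apply: IH => //.
  by move: hS; rewrite (cardfsD1 p) pS.
Qed.

Lemma count_lt (s : seq R) (a b : pred R) : subpred a b ->
  (exists2 z, z \in s & b z && ~~ a z) -> (count a s < count b s)%N.
Proof.
move=> sab; elim: s => [[z]//|x s IH] [z]; rewrite inE => /orP[/eqP->|zs] h /=.
  case/andP: h => -> /negPf ->; rewrite add0n add1n ltnS; exact: sub_count.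
have := IH (ex_intro2 _ _ z zs h).
case: (boolP (a x)) => ax; first by rewrite (sab _ ax) /=; rewrite ltn_add2l.
rewrite add0n => h2; apply: leq_trans h2 _; exact: leq_addl.
Qed.

Definition rank (S : {fset R}) x := count (fun y => y <= x) S.

Lemma rank_mono S x y : x <= y -> (rank S x <= rank S y)%N.
Proof. by move=> xy; apply: sub_count => z /= zx; apply: le_trans zx xy. Qed.

Lemma rank_lt S x y : y \in S -> x < y -> (rank S x < rank S y)%N.
Proof.
move=> yS xy; apply: count_lt.
  by move=> z /= zx; apply: le_trans zx (ltW xy).
by exists y => //=; rewrite lexx -ltNge.
Qed.

Lemma rank_pos S x : x \in S -> (0 < rank S x)%N.
Proof. by move=> xS; rewrite -has_count; apply/hasP; exists x. Qed.

Lemma rank_le S x : (rank S x <= #|` S|)%N.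
Proof. exact: count_size. Qed.

Lemma rank_surj S m : (0 < m <= #|` S|)%N -> exists2 z, z \in S & rank S z = m.
Proof.
move=> hm.
set r := [seq rank S x | x <- (S : seq R)].
have ur : uniq r.
  rewrite map_inj_in_uniq ?fset_uniq // => x y xS yS e.
  case: (ltgtP x y) => // h.
    by have := @rank_lt S x y yS h; rewrite e ltnn.
  by have := @rank_lt S y x xS h; rewrite e ltnn.
have sub : {subset r <= iota 1 #|` S|}.
  move=> i /mapP[x xS ->]; rewrite mem_iota add1n ltnS rank_le andbT.
  exact: rank_pos.
have sz : (size (iota 1 #|` S|) <= size r)%N by rewrite size_iota size_map.
have [_ eqr] := uniq_min_size ur sub sz.
have : m \in iota 1 #|` S| by rewrite mem_iota add1n ltnS.
by rewrite -eqr => /mapP[z zS ->]; exists z.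
Qed.

Definition c0 (S : {fset R}) x := (logn 2 (rank S x)).+1.

Lemma c0_pair S : pairP S (c0 S).
Proof.
move=> x y xS yS xy [ce].
have rx := @rank_pos S x xS; have ry := @rank_pos S y yS.
have [a ca ea] := pfactor_coprime (isT : prime 2) rx.
have [b cb eb] := pfactor_coprime (isT : prime 2) ry.
set e := logn 2 (rank S x) in ce ea.
rewrite -ce in eb.
rewrite coprime2n in ca; rewrite coprime2n in cb.
have e0 : (0 < 2 ^ e)%N by rewrite expn_gt0.
have ab : (a < b)%N by rewrite -(ltn_pmul2r e0) -ea -eb; exact: rank_lt.
have ab1 : (a.+1 < b)%N.
  rewrite ltn_neqAle ab andbT; apply/eqP => be; move: cb; rewrite -be /= ca.
  by [].
set m := (a.+1 * 2 ^ e)%N.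
have m1 : (rank S x < m)%N by rewrite ea ltn_pmul2r.
have m2 : (m < rank S y)%N by rewrite eb ltn_pmul2r.
have [z zS rz] : exists2 z, z \in S & rank S z = m.
  apply: rank_surj.
  by rewrite (leq_ltn_trans _ m1) //= (leq_trans (ltnW m2)) ?rank_le.
have xz : x < z.
  by rewrite ltNge; apply/negP => /(@rank_mono S _ _); rewrite rz leqNgt m1.
have zy : z < y.
  by rewrite ltNge; apply/negP => /(@rank_mono S _ _); rewrite rz leqNgt m2.
exists z; split => //.
rewrite /c0 ltnS -/e rz -pfactor_dvdn //; last by rewrite muln_gt0 e0.
by rewrite expnS /m dvdn_pmul2r // dvdn2 /= ca.
Qed.

Lemma c0_palette S : in_palette (up_log 2 (#|` S|).+1) S (c0 S).
Proof.
move=> x xS; rewrite /c0 ltnS /=.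
have rx := @rank_pos S x xS.
have h1 : (2 ^ logn 2 (rank S x) <= rank S x)%N.
  exact: dvdn_leq rx (pfactor_dvdnn _ _).
have h2 : ((#|` S|).+1 <= 2 ^ up_log 2 (#|` S|).+1)%N by apply: up_logP.
rewrite -(ltn_exp2l _ _ (isT : (1 < 2)%N)).
by apply: leq_ltn_trans h1 _; apply: leq_trans h2; rewrite ltnS rank_le.
Qed.

End Helpers.

Theorem mainTheorem12 (R : realType) (P0 : {fset R}) :
  exists c0 : R -> nat, maintainable (up_log 2 (#|` P0|).+1) P0 c0.
Proof.
exists (@c0 R P0); apply: (@maint_all R _ _ P0 _ (leqnn _)).
- exact: c0_pair.
- exact: c0_palette.
Qed.
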